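(* Let $G$ be a group, $A$ an additive abelian group with a right $G$-action by group automorphisms, and $n\in\mathbb Z_+$. For every $a\in\mathcal P_n(G,A)$, all values $[D^na](g_1,\dots,g_n)$ are $G$-invariant, i.e. $D^n(\mathcal P_n(G,A))\subseteq\mathcal C^n(G,A^G)$. Consequently the restriction $D^n|_{\mathcal P_n}:\mathcal P_n(G,A)\to\mathcal C^n(G,A^G)$ has kernel $\mathcal P_{n-1}(G,A)$ (for $n\ge1$), giving an exact sequence $0\to\mathcal P_{n-1}(G,A)\to\mathcal P_n(G,A)\to\mathcal C^n(G,A^G)$ and an injective homomorphism $\mathcal P_n(G,A)/\mathcal P_{n-1}(G,A)\hookrightarrow\mathcal C^n(G,A^G)$.
   Context: Right action: $a\mapsto a^g$, $a^{\mathbf e}=a$, $(a^g)^h=a^{gh}$, additive in $a$; $\mathbf e$ the identity. $A^G=\{a:a^g=a\ \forall g\}$. $\mathcal C^0(G,M)=M$ and for $n\ge1$, $\mathcal C^n(G,M)$ is the group of functions $G^n\to M$ vanishing whenever some argument is $\mathbf e$ (for $M=A$ or $M=A^G$). For $n\ge1$, $(d_nc)(g_1,\dots,g_n)=[c(g_1,\dots,g_{n-1})]^{g_n}-c(g_1,\dots,g_{n-1})$; $D^0=\mathrm{id}_A$, $D^n=d_nD^{n-1}$; $\mathcal P_n(G,A)=\ker D^{n+1}$. *)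

(* Defs.v *)
From mathcomp Require Import all_boot all_order all_algebra.
Set Implicit Arguments. Unset Strict Implicit. Unset Printing Implicit Defensive.
Import GRing.Theory.
Local Open Scope ring_scope.

Definition is_group (G : Type) (mul : G -> G -> G) (e : G) (inv : G -> G) : Prop :=
  [/\ (forall x y z, mul x (mul y z) = mul (mul x y) z),
      (forall x, mul e x = x), (forall x, mul x e = x),
      (forall x, mul (inv x) x = e) & (forall x, mul x (inv x) = e)].

Definition is_right_action (G : Type) (mul : G -> G -> G) (e : G)
    (A : zmodType) (act : A -> G -> A) : Prop :=
  [/\ (forall a, act a e = a),
      (forall a g h, act (act a g) h = act a (mul g h)) &
      (forall a b g, act (a + b) g = act a g + act b g)].

(* n-cochains are functions G^n -> A, with G^n represented as 'I_n -> G. *)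
Fixpoint Dn (G : Type) (A : zmodType) (act : A -> G -> A) (n : nat)
    (a : A) : ('I_n -> G) -> A :=
  match n with
  | 0 => fun _ => a
  | m.+1 => fun g : 'I_m.+1 -> G =>
      act (@Dn G A act m a (fun i => g (widen_ord (leqnSn m) i))) (g ord_max)
      - @Dn G A act m a (fun i => g (widen_ord (leqnSn m) i))
  end.
Arguments Dn {G A} act n a _.

Definition Pn (G : Type) (A : zmodType) (act : A -> G -> A) (n : nat) (a : A) : Prop :=
  forall g : 'I_n.+1 -> G, Dn act n.+1 a g = 0.

Definition invariant (G : Type) (A : zmodType) (act : A -> G -> A) (x : A) : Prop :=
  forall g, act x g = x.

Definition in_Cn_inv (G : Type) (e : G) (A : zmodType) (act : A -> G -> A)
    (n : nat) (c : ('I_n -> G) -> A) : Prop :=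
  (forall g, invariant act (c g)) /\
  (forall g : 'I_n -> G, (exists i, g i = e) -> c g = 0).

(* Main.v *)
Require Import Defs.
From mathcomp Require Import all_boot all_order all_algebra.
Local Open Scope ring_scope.
Import GRing.Theory.

Lemma Dn_ext (G : Type) (A : zmodType) (act : A -> G -> A) n a
  (g g' : 'I_n -> G) : (forall i, g i = g' i) -> Dn act n a g = Dn act n a g'.
Proof.
elim: n g g' => [|n IH] g g' H //=.
by rewrite (IH _ (fun i => g' (widen_ord (leqnSn n) i))) // H.
Qed.

Lemma act0 (G : Type) (A : zmodType) (act : A -> G -> A) :
  (forall a b g, act (a + b) g = act a g + act b g) -> forall g, act 0 g = 0.
Proof.
move=> H g; have := H 0 0 g; rewrite addr0 => h.
by apply: (addrI (act 0 g)); rewrite addr0 -h.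
Qed.

Lemma Dn_e (G : Type) (e : G) (A : zmodType) (act : A -> G -> A) :
  (forall a, act a e = a) ->
  (forall a b g, act (a + b) g = act a g + act b g) ->
  forall n a (g : 'I_n -> G) i, g i = e -> Dn act n a g = 0.
Proof.
move=> He Hadd; elim=> [|n IH] a g i Hi; first by case: i Hi.
simpl.
have [Hm|Hm] := eqVneq i ord_max.
  by rewrite -Hm Hi He subrr.
have Hlt : (i < n)%N.
  rewrite ltn_neqAle -ltnS ltn_ord andbT; apply: contraNneq Hm => Hx; apply/eqP; apply: val_inj; exact: Hx.
rewrite (IH a _ (Ordinal Hlt)) /=; last by rewrite -Hi; congr g; apply/val_inj.
by rewrite act0 // subrr.
Qed.

Theorem lemma1p17 (G : Type) (mul : G -> G -> G) (e : G) (inv : G -> G)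
  (A : zmodType) (act : A -> G -> A) :
  is_group mul e inv -> is_right_action mul e act ->
  (forall (n : nat) (a : A), Pn act n a -> in_Cn_inv e act (Dn act n a)) /\
  (forall (n : nat), (0 < n)%N ->
     forall a : A, (Pn act n a /\ (forall g, Dn act n a g = 0)) <-> Pn act n.-1 a).
Proof.
move=> _ [He Hcomp Hadd]; split.
  move=> n a HP; split; last by move=> g [i Hi]; exact: (@Dn_e G e A act He Hadd n a g i Hi).
  move=> h x.
  pose g := fun i : 'I_n.+1 => if (insub (nat_of_ord i) : option 'I_n) is Some j then h j else x.
  have := HP g => /=.
  have -> : g ord_max = x by rewrite /g insubF //= ltnn.
  rewrite (@Dn_ext _ _ act n a _ h).
    by move/eqP; rewrite subr_eq0 => /eqP.
  by move=> i; rewrite /g /= insubT /=; [exact: ltn_ord| move=> Hi; congr h; apply/val_inj].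
case=> [//|n] _ a; split; first by case.
move=> HP; split=> // g.
change (act (Dn act n.+1 a (fun i => g (widen_ord (leqnSn n.+1) i))) (g ord_max) - Dn act n.+1 a (fun i => g (widen_ord (leqnSn n.+1) i)) = 0).
have H : Dn act n.+1 a (fun i => g (widen_ord (leqnSn n.+1) i)) = 0 := HP _.
by rewrite H act0 // subrr.
Qed.
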